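(* Let $S$ be a T2R semigroup, with $S=S_0\cup S_1$ as in the definition, and let $b\in S_0$ be such that $|J_b|=2$. Then $S_0J_b\subseteq I(b)$, $J_bS_0\subseteq I(b)$, and either $S_1J_b\subseteq I(b)$ or $S_1J_b=J_b$.
   Context: A semigroup $S$ is a $\Delta$-semigroup if the lattice of all congruences of $S$ is a chain with respect to inclusion. A semigroup $N$ with zero $0$ is nil if every element has some power equal to $0$; non-trivial means having more than one element. A T2R semigroup is a $\Delta$-semigroup $S$ which is the disjoint union of a non-trivial nil ideal $S_0$ (with zero $0$, which is then the zero of $S$) and a subsemigroup $S_1$ which is a two-element right zero semigroup (i.e. $S_1=\{u,v\}$ with $xy=y$ for $x,y\in S_1$). $S^1$ denotes $S$ with an identity $1$ adjoined. For $a\in S$: $J(a)=S^1aS^1$, $J_a=\{s\in S:J(s)=J(a)\}$, $I(a)=J(a)\setminus J_a$. Products of sets are taken elementwise. *)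

(* Defs.v *)
From Stdlib Require Import Arith.
Set Implicit Arguments.

Section Semigroups.
Variable T : Type.
Variable mul : T -> T -> T.

Definition associative_op : Prop :=
  forall x y z, mul x (mul y z) = mul (mul x y) z.

Definition is_congruence (rho : T -> T -> Prop) : Prop :=
  (forall x, rho x x) /\
  (forall x y, rho x y -> rho y x) /\
  (forall x y z, rho x y -> rho y z -> rho x z) /\
  (forall x y s, rho x y -> rho (mul s x) (mul s y) /\ rho (mul x s) (mul y s)).

Definition rel_incl (rho sigma : T -> T -> Prop) : Prop :=
  forall x y, rho x y -> sigma x y.

Definition Delta_semigroup : Prop :=
  associative_op /\
  forall rho sigma, is_congruence rho -> is_congruence sigma ->
    rel_incl rho sigma \/ rel_incl sigma rho.

(* npow a n = a^(n+1) *)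
Fixpoint npow (a : T) (n : nat) : T :=
  match n with
  | O => a
  | S k => mul (npow a k) a
  end.

Definition T2R (S0 : T -> Prop) (z u v : T) : Prop :=
  Delta_semigroup /\
  (forall a s, S0 a -> S0 (mul a s) /\ S0 (mul s a)) /\
  S0 z /\ (forall a, S0 a -> mul z a = z /\ mul a z = z) /\
  (forall a, S0 a -> exists n, npow a n = z) /\
  (exists a, S0 a /\ a <> z) /\
  u <> v /\ ~ S0 u /\ ~ S0 v /\
  (forall x, S0 x \/ x = u \/ x = v) /\
  mul u u = u /\ mul u v = v /\ mul v u = u /\ mul v v = v.

(* x ∈ J(a) = S^1 a S^1 *)
Definition inJ (a x : T) : Prop :=
  x = a \/ (exists s, x = mul s a) \/ (exists t, x = mul a t) \/
  (exists s t, x = mul (mul s a) t).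

Definition Jclass (a s : T) : Prop := forall x, inJ s x <-> inJ a x.

Definition inI (a x : T) : Prop := inJ a x /\ ~ Jclass a x.

End Semigroups.

(* Main.v *)
Require Import Defs.
From Stdlib Require Import Classical PeanoNat.
Set Implicit Arguments. Unset Strict Implicit.

Ltac dHS HS := destruct HS as [[Has _] [Hid [Hz0 [Hz [Hnil [_ [_ [_ [_ [Hall [Huu [Huv [Hvu Hvv]]]]]]]]]]]]]; unfold associative_op in Has.

Definition mulL {T} (mul : T -> T -> T) (p : option T) x :=
  match p with None => x | Some p => mul p x end.
Definition mulR {T} (mul : T -> T -> T) x (q : option T) :=
  match q with None => x | Some q => mul x q end.

Section H.
Context (T : Type) (mul : T -> T -> T) (S0 : T -> Prop) (z u v : T).

Lemma inJ_opt (Has : forall x y w, mul x (mul y w) = mul (mul x y) w) a x : inJ mul a x -> exists p q, x = mulL mul p (mulR mul a q).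
Proof.
  intros [H|[[s H]|[[t H]|[s [t H]]]]]; subst.
  - exists None, None; reflexivity.
  - exists (Some s), None; reflexivity.
  - exists None, (Some t); reflexivity.
  - exists (Some s), (Some t); simpl; auto.
Qed.

Lemma S0_inJ (HS : T2R mul S0 z u v) a x : S0 a -> inJ mul a x -> S0 x.
Proof.
  dHS HS. intros Ha [H|[[s H]|[[t H]|[s [t H]]]]]; subst; auto.
  - exact (proj2 (Hid _ s Ha)).
  - exact (proj1 (Hid _ t Ha)).
  - exact (proj1 (Hid _ t (proj2 (Hid _ s Ha)))).
Qed.

Lemma zero_S (HS : T2R mul S0 z u v) s : mul s z = z /\ mul z s = z.
Proof.
  pose proof HS as HS'. dHS HS.
  split.
  - replace (mul s z) with (mul s (mul z z)) by (f_equal; apply (Hz z Hz0)).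
    rewrite Has. apply (proj2 (Hz _ (proj2 (Hid z s Hz0)))).
  - replace (mul z s) with (mul (mul z z) s) by (f_equal; apply (Hz z Hz0)).
    rewrite <- Has. apply (proj1 (Hz _ (proj1 (Hid z s Hz0)))).
Qed.

Lemma inJ_z (HS : T2R mul S0 z u v) x : inJ mul z x -> x = z.
Proof.
  intros [H|[[s H]|[[t H]|[s [t H]]]]]; subst; auto;
  repeat first [rewrite (proj1 (zero_S HS _)) | rewrite (proj2 (zero_S HS _))]; auto.
Qed.

Lemma transfer b c y : Jclass mul b c -> Jclass mul b y -> inJ mul y c.
Proof.
  intros Hc Hy. apply (proj2 (Hy c)). apply (proj1 (Hc c)). left; reflexivity.
Qed.

Lemma noz (HS : T2R mul S0 z u v) b
  (H2 : exists c d, c <> d /\ forall s, Jclass mul b s <-> (s = c \/ s = d)) :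
  Jclass mul b z -> False.
Proof.
  intros Hz. destruct H2 as [c [d [Hcd Hs]]].
  assert (Ec : c = z) by (apply (inJ_z HS); apply transfer with b; auto; apply Hs; auto).
  assert (Ed : d = z) by (apply (inJ_z HS); apply transfer with b; auto; apply Hs; auto).
  congruence.
Qed.

Lemma Lnil (HS : T2R mul S0 z u v) (g : T -> T)
  (Hg : forall a t, g (mul a t) = mul a (g t)) (HgS : forall t, S0 t -> S0 (g t))
  x P : S0 x -> S0 P -> x = mul P (g x) -> x = z.
Proof.
  pose proof HS as HS'. dHS HS. intros Hx HP Hx0.
  assert (Hit : forall k a t, Nat.iter k g (mul a t) = mul a (Nat.iter k g t)).
  { induction k; intros; simpl; auto. rewrite IHk; auto. }
  assert (HitS : forall k t, S0 t -> S0 (Nat.iter k g t)).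
  { induction k; intros; simpl; auto. }
  assert (Hn : forall n, x = mul (npow mul P n) (Nat.iter (S n) g x)).
  { induction n.
    - exact Hx0.
    - transitivity (mul (npow mul P n) (Nat.iter (S n) g x)); [exact IHn|].
      replace (Nat.iter (S n) g x) with (Nat.iter (S n) g (mul P (g x)))
        by (f_equal; symmetry; exact Hx0).
      rewrite Hit, Has. change (npow mul P (S n)) with (mul (npow mul P n) P).
      f_equal. symmetry; apply Nat.iter_succ_r. }
  destruct (Hnil P HP) as [n Hn0]. rewrite (Hn n), Hn0. apply (proj1 (Hz _ (HitS (S n) _ Hx))).
Qed.

Lemma Lnil' (HS : T2R mul S0 z u v) (h : T -> T)
  (Hh : forall a t, h (mul t a) = mul (h t) a) (HhS : forall t, S0 t -> S0 (h t))
  x r : S0 x -> S0 r -> x = h (mul x r) -> x = z.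
Proof.
  pose proof HS as HS'. dHS HS. intros Hx Hr Hx0.
  assert (Hit : forall k a t, Nat.iter k h (mul t a) = mul (Nat.iter k h t) a).
  { induction k; intros; simpl; auto. rewrite IHk; auto. }
  assert (HitS : forall k t, S0 t -> S0 (Nat.iter k h t)).
  { induction k; intros; simpl; auto. }
  assert (Hcomm : forall n, mul r (npow mul r n) = npow mul r (S n)).
  { induction n; simpl; auto. rewrite Has, IHn. reflexivity. }
  assert (Hn : forall n, x = Nat.iter (S n) h (mul x (npow mul r n))).
  { induction n.
    - exact Hx0.
    - transitivity (Nat.iter (S n) h (mul x (npow mul r n))); [exact IHn|].
      rewrite Hx0 at 1. rewrite <- Hh, <- Has, Hcomm.
      symmetry; apply Nat.iter_succ_r. }
  destruct (Hnil r Hr) as [n Hn0]. rewrite (Hn n), Hn0.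
  rewrite Hit. apply (proj2 (Hz _ (HitS _ _ Hx))).
Qed.

Lemma mulR_assoc a t q : (forall x y w, mul x (mul y w) = mul (mul x y) w) ->
  mulR mul (mul a t) q = mul a (mulR mul t q).
Proof. intros Has; destruct q; simpl; auto. Qed.

Lemma mulR_assoc2 c a q : (forall x y w, mul x (mul y w) = mul (mul x y) w) ->
  mulR mul (mul c a) q = mul c (mulR mul a q).
Proof. intros Has; destruct q; simpl; auto. Qed.

Lemma mulR_S0 (HS : T2R mul S0 z u v) t q : S0 t -> S0 (mulR mul t q).
Proof. dHS HS. destruct q; simpl; auto. intros H; apply (proj1 (Hid _ t0 H)). Qed.

Lemma mulL_S0 (HS : T2R mul S0 z u v) t p : S0 t -> S0 (mulL mul p t).
Proof. dHS HS. destruct p; simpl; auto. intros H; apply (proj2 (Hid _ t0 H)). Qed.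

Lemma inJb_S0 (HS : T2R mul S0 z u v) b c : S0 b -> Jclass mul b c -> S0 c.
Proof. intros Hb Hc. apply (S0_inJ HS (a:=b)); auto. apply (proj1 (Hc c)); left; auto. Qed.

Lemma contraL (HS : T2R mul S0 z u v) b
  (H2 : exists c d, c <> d /\ forall s, Jclass mul b s <-> (s = c \/ s = d))
  (Hb : S0 b) (g : T -> T)
  (Hg : forall a t, g (mul a t) = mul a (g t)) (HgS : forall t, S0 t -> S0 (g t))
  c a p : Jclass mul b c -> S0 a -> c = mulL mul p (mul a (g c)) -> False.
Proof.
  pose proof HS as HS'. dHS HS. intros Hc Ha E.
  assert (c = z).
  { apply (Lnil HS' Hg HgS (x:=c) (P:=mulL mul p a)); auto.
    - apply (inJb_S0 HS' (b:=b)); auto.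
    - apply (mulL_S0 HS'); auto.
    - rewrite E at 1. destruct p; simpl; auto. }
  subst. apply (noz HS' H2 Hc).
Qed.

Lemma contraR (HS : T2R mul S0 z u v) b
  (H2 : exists c d, c <> d /\ forall s, Jclass mul b s <-> (s = c \/ s = d))
  (Hb : S0 b) c a p : Jclass mul b c -> S0 a -> c = mulL mul p (mul c a) -> False.
Proof.
  pose proof HS as HS'. dHS HS. intros Hc Ha E.
  assert (c = z).
  { eapply Lnil' with (h:=mulL mul p) (r:=a); eauto.
    - intros; destruct p; simpl; auto.
    - intros; apply (mulL_S0 HS'); auto.
    - apply (inJb_S0 HS' (b:=b)); auto. }
  subst. apply (noz HS' H2 Hc).
Qed.

End H.


Theorem corollary3 (T : Type) (mul : T -> T -> T) (S0 : T -> Prop) (z u v : T)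
  (HS : T2R mul S0 z u v) (b : T) (Hb : S0 b)
  (H2 : exists c d, c <> d /\ forall s, Jclass mul b s <-> (s = c \/ s = d)) :
  (forall a c, S0 a -> Jclass mul b c -> inI mul b (mul a c)) /\
  (forall c a, Jclass mul b c -> S0 a -> inI mul b (mul c a)) /\
  ((forall s c, (s = u \/ s = v) -> Jclass mul b c -> inI mul b (mul s c)) \/
   (forall x, (exists s c, (s = u \/ s = v) /\ Jclass mul b c /\ x = mul s c)
              <-> Jclass mul b x)).
Proof.
  pose proof HS as HS'. dHS HS.
  assert (inJb : forall c s, Jclass mul b c -> inJ mul b (mul s c)).
  { intros c s Hc. apply (proj1 (Hc _)). right; left; exists s; auto. }
  split; [|split].
  - intros a c Ha Hc. split; auto. intros Hac.
    destruct (inJ_opt Has (transfer Hc Hac)) as [p [q E]].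
    rewrite (mulR_assoc _ _ _ Has) in E.
    exact (contraL HS' H2 Hb (g:=fun t => mulR mul t q)
             (fun a t => mulR_assoc _ _ _ Has) (fun t Ht => mulR_S0 HS' q Ht) Hc Ha E).
  - intros c a Hc Ha. split.
    + apply (proj1 (Hc _)). right; right; left; exists a; auto.
    + intros Hca.
      destruct (inJ_opt Has (transfer Hc Hca)) as [p [q E]].
      rewrite (mulR_assoc2 _ _ _ Has) in E.
      exact (contraR HS' H2 Hb Hc (mulR_S0 HS' q Ha) E).
  - destruct (classic (exists s c, (s = u \/ s = v) /\ Jclass mul b c /\ Jclass mul b (mul s c)))
      as [[s0 [c0 [Hs0 [Hc0 Hx]]]] | HN].
    + right.
      set (x := mul s0 c0) in *.
      assert (Hfix : forall t, t = u \/ t = v -> mul t x = x).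
      { intros t Ht. unfold x. rewrite Has. f_equal.
        destruct Ht, Hs0; subst; auto. }
      assert (Hfy : forall y, Jclass mul b y -> forall t, t = u \/ t = v -> mul t y = y).
      { intros y Hy t Ht.
        destruct (inJ_opt Has (transfer Hy Hx)) as [p [q E]].
        assert (E' : y = mulR mul x q).
        { destruct p as [p|]; simpl in E; auto.
          destruct (Hall p) as [Hp | Hp].
          - exfalso.
            destruct (inJ_opt Has (transfer Hx Hy)) as [p' [q' E2]].
            rewrite E in E2. rewrite (mulR_assoc _ _ _ Has) in E2.
            exact (contraL HS' H2 Hb (g:=fun t => mulR mul (mulR mul t q) q')
                     (fun a t => ltac:(cbv beta; rewrite !(mulR_assoc _ _ _ Has); reflexivity))
                     (fun t Ht => mulR_S0 HS' q' (mulR_S0 HS' q Ht)) Hx Hp E2).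
          - rewrite E, <- (mulR_assoc _ _ _ Has), Hfix; auto. }
        rewrite E', <- (mulR_assoc _ _ _ Has), Hfix; auto. }
      intros y. split.
      * intros [s [c [Hs [Hc Ey]]]]. rewrite Ey, (Hfy c Hc s Hs). auto.
      * intros Hy. exists u, y. split; auto. split; auto. symmetry; apply Hfy; auto.
    + left. intros s c Hs Hc. split; auto. intros Hsc. apply HN. exists s, c; auto.
Qed.
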